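(* Let $X$, $Y$ be disjoint sets of cardinality at least two, $T$ the $(|X|,|Y|)$-biregular tree, and $c, c'$ legal colourings of $X$ and $Y$. If $v,v'\in VT$ are at even distance, then there exists $\sigma\in\mathrm{Sym}(X\cup Y)$ with $\sigma(X)=X$ satisfying $\sigma(c'(\overline{A}(v'))) = c(\overline{A}(v))$, and for every such $\sigma$ there exists a unique automorphism $g\in\mathrm{Aut}(T)$ with $gV_X=V_X$ such that $gv=v'$ and $c = \sigma\circ c'\circ g$ (as maps $AT\to X\cup Y$).
   Context: $T$ has natural bipartition $VT=V_X\sqcup V_Y$ (vertices in $V_X$ have valency $|X|$, in $V_Y$ valency $|Y|$). $A(v)$, $\overline{A}(v)$ are the sets of arcs (ordered pairs of adjacent vertices) with origin, resp. terminus, $v$; automorphisms act on arcs in the natural way. A legal colouring is a map $c:AT\to X\cup Y$ restricting to a bijection $A(v)\to X$ for $v\in V_X$, to a bijection $A(v)\to Y$ for $v\in V_Y$, and constant on each $\overline{A}(v)$; $c(\overline{A}(v))$ denotes this constant value. *)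

(* Defs.v *)
From Stdlib Require Import List Arith.
Import ListNotations.
Set Implicit Arguments.

Section Graph.
Variable V : Type.
Variable adj : V -> V -> Prop.

Fixpoint chain (l : list V) : Prop :=
  match l with
  | x :: ((y :: _) as t) => adj x y /\ chain t
  | _ => True
  end.

Inductive walk : V -> V -> nat -> Prop :=
  | walk_nil : forall v, walk v v 0
  | walk_cons : forall u w v n, adj u w -> walk w v n -> walk u v (S n).

Definition is_dist (u v : V) (n : nat) : Prop :=
  walk u v n /\ forall m, walk u v m -> n <= m.

Definition even_distance (u v : V) : Prop :=
  exists n, is_dist u v n /\ Nat.Even n.

Definition has_cycle : Prop :=
  exists (x : V) (l : list V),
    NoDup (x :: l) /\ 2 <= length l /\ chain (x :: l ++ [x]).

Definition is_tree : Prop :=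
  (forall u v, adj u v -> adj v u) /\
  (forall v, ~ adj v v) /\
  (forall u v, exists n, walk u v n) /\
  ~ has_cycle.

Definition is_aut (g : V -> V) : Prop :=
  (forall u v, g u = g v -> u = v) /\
  (forall v', exists v, g v = v') /\
  (forall u v, adj u v <-> adj (g u) (g v)).
End Graph.

(* The (|X|,|Y|)-biregular tree with its natural bipartition V_X (= inVX) and
   V_Y (= complement): a tree, adjacent vertices in different parts, and the
   neighbourhood of v in V_X (resp. V_Y) is in bijection with X (resp. Y). *)
Definition nbhd_bij (V A : Type) (adj : V -> V -> Prop) (v : V) : Prop :=
  exists f : {w : V | adj v w} -> A,
    (forall a b, f a = f b -> a = b) /\ (forall x, exists a, f a = x).

Definition biregular_tree (X Y V : Type) (adj : V -> V -> Prop)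
    (inVX : V -> Prop) : Prop :=
  is_tree adj /\
  (forall u v, adj u v -> (inVX u <-> ~ inVX v)) /\
  (forall v, inVX v -> nbhd_bij X adj v) /\
  (forall v, ~ inVX v -> nbhd_bij Y adj v).

(* Arcs are ordered pairs (u,w) with adj u w; a colouring is given as a map
   c : V -> V -> X + Y whose values on arcs (u,w) are the relevant ones.
   X \cup Y is the disjoint union X + Y. *)
Definition legal_colouring (X Y V : Type) (adj : V -> V -> Prop)
    (inVX : V -> Prop) (c : V -> V -> X + Y) : Prop :=
  (forall v, inVX v ->
     (forall w, adj v w -> exists x, c v w = inl x) /\
     (forall w1 w2, adj v w1 -> adj v w2 -> c v w1 = c v w2 -> w1 = w2) /\
     (forall x, exists w, adj v w /\ c v w = inl x)) /\
  (forall v, ~ inVX v ->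
     (forall w, adj v w -> exists y, c v w = inr y) /\
     (forall w1 w2, adj v w1 -> adj v w2 -> c v w1 = c v w2 -> w1 = w2) /\
     (forall y, exists w, adj v w /\ c v w = inr y)) /\
  (forall v u1 u2, adj u1 v -> adj u2 v -> c u1 v = c u2 v).

Definition sym_fix_X (X Y : Type) (s : X + Y -> X + Y) : Prop :=
  (forall a b, s a = s b -> a = b) /\
  (forall b, exists a, s a = b) /\
  (forall x, exists x', s (inl x) = inl x') /\
  (forall x', exists x, s (inl x) = inl x').

Definition preserves_part (V : Type) (inVX : V -> Prop) (g : V -> V) : Prop :=
  (forall v, inVX v -> inVX (g v)) /\
  (forall v', inVX v' -> exists v, inVX v /\ g v = v').

Definition good_aut (X Y V : Type) (adj : V -> V -> Prop) (inVX : V -> Prop)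
    (c c' : V -> V -> X + Y) (s : X + Y -> X + Y) (v v' : V) (g : V -> V) : Prop :=
  is_aut adj g /\ preserves_part inVX g /\ g v = v' /\
  (forall a b, adj a b -> c a b = s (c' (g a) (g b))).

(* Main.v *)
Require Import Defs.
From Stdlib Require Import List Arith Lia Classical ClassicalEpsilon.
Import ListNotations.

Section Tr.
Variable V : Type.
Variable adj : V -> V -> Prop.
Hypothesis adj_sym : forall u w, adj u w -> adj w u.

Inductive rw : V -> list V -> V -> Prop :=
 | rw_nil a : rw a [a] a
 | rw_cons a b l c : (a = b \/ adj a b) -> rw b l c -> rw a (a :: l) c.

Inductive sw : V -> list V -> V -> Prop :=
 | sw_nil a : sw a [a] a
 | sw_cons a b l c : adj a b -> sw b l c -> sw a (a :: l) c.

Lemma rw_app a l b m c : rw a l b -> rw b m c -> rw a (l ++ m) c.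
Proof.
  induction 1 as [a|a b0 l0 c0 Hs Hr IH]; intros H; simpl.
  - exact (rw_cons a a m c (or_introl eq_refl) H).
  - econstructor; eauto.
Qed.

Lemma rw_snoc a l b c : rw a l b -> (b = c \/ adj b c) -> rw a (l ++ [c]) c.
Proof.
  induction 1; intros H1; simpl.
  - exact (rw_cons a c [c] c H1 (rw_nil c)).
  - econstructor; eauto.
Qed.

Lemma rw_rev a l b : rw a l b -> rw b (rev l) a.
Proof.
  induction 1; simpl.
  - constructor.
  - apply rw_snoc with b; auto.
    destruct H as [->|H]; auto.
Qed.

Lemma sw_head a P b : sw a P b -> exists t, P = a :: t.
Proof. destruct 1; eauto. Qed.

Lemma sw_suffix P1 : forall b a P2 c, sw b (P1 ++ a :: P2) c -> sw a (a :: P2) c.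
Proof.
  induction P1; simpl; intros b x P2 c H.
  - inversion H; subst; econstructor; eauto.
  - inversion H; subst; [destruct P1; discriminate | eapply IHP1; eauto].
Qed.

Lemma extract a l b : rw a l b -> exists P, sw a P b /\ NoDup P /\ incl P l.
Proof.
  induction 1.
  - exists [a]. split; [constructor|split].
    + constructor; [intros []|constructor].
    + apply incl_refl.
  - destruct IHrw as [P [HP [HN HI]]].
    destruct (classic (In a P)) as [Hin|Hnin].
    + apply in_split in Hin as [P1 [P2 ->]]. exists (a :: P2). split; [|split].
      * eapply sw_suffix; eauto.
      * eapply NoDup_app_remove_l; eauto.
      * intros x Hx; right; apply HI; apply in_or_app; right; exact Hx.
    + destruct H as [<-|Hab].
      * exfalso; apply Hnin. destruct (sw_head _ _ _ HP) as [t ->]. left; auto.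
      * exists (a :: P). split; [|split].
        -- econstructor; eauto.
        -- constructor; auto.
        -- intros x [<-|Hx]; [left; auto|right; auto].
Qed.

Lemma sw_chain a P b x : sw a P b -> adj b x -> chain adj (P ++ [x]).
Proof.
  induction 1; intros Hx; simpl.
  - auto.
  - inversion H0; subst; simpl in *; split; auto; apply IHsw; auto.
Qed.

Hypothesis nocyc : ~ has_cycle adj.

Lemma noA x p q l : adj x p -> adj q x -> p <> q -> rw p l q -> ~ In x l -> False.
Proof.
  intros H1 H2 H3 H4 H5.
  destruct (extract _ _ _ H4) as [P [HP [HN HI]]].
  apply nocyc. exists x, P. split; [|split].
  - constructor; auto.
  - inversion HP; subst. congruence. destruct (sw_head _ _ _ H0) as [t ->]. simpl; lia.
  - destruct (sw_head _ _ _ HP) as [t ->]. simpl. split; auto.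
    change (chain adj ((p :: t) ++ [x])). eapply sw_chain; eauto.
Qed.

Hypothesis conn : forall u w, exists n, walk adj u w n.
Variable inVX : V -> Prop.
Hypothesis bip : forall u w, adj u w -> (inVX u <-> ~ inVX w).

Lemma walk_snoc u w n z : walk adj u w n -> adj w z -> walk adj u z (S n).
Proof.
  induction 1 as [x|u0 x0 w0 n0 Ha Hw IH]; intros H.
  - econstructor; eauto. constructor.
  - econstructor; eauto.
Qed.

Lemma walk_sym u w n : walk adj u w n -> walk adj w u n.
Proof.
  induction 1.
  - constructor.
  - eapply walk_snoc; eauto.
Qed.

Lemma has_dist u w n : walk adj u w n -> exists m, is_dist adj u w m.
Proof.
  induction n as [n IH] using lt_wf_ind; intros H.
  destruct (classic (forall m, walk adj u w m -> n <= m)) as [H1|H1].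
  - exists n; split; auto.
  - apply not_all_ex_not in H1 as [m Hm].
    apply (IH m).
    + destruct (classic (walk adj u w m)) as [Hw|Hw]; [|tauto].
      assert (~ n <= m) by tauto. lia.
    + destruct (classic (walk adj u w m)) as [Hw|Hw]; tauto.
Qed.

Lemma parity u w n : walk adj u w n ->
  (Nat.Even n -> (inVX u <-> inVX w)) /\ (Nat.Odd n -> (inVX u <-> ~ inVX w)).
Proof.
  induction 1 as [x|u x w n Ha Hw IH].
  - split; intros H; [tauto|]. exfalso. destruct H as [k Hk]; lia.
  - pose proof (bip _ _ Ha) as B. destruct IH as [IE IO]. split; intros H.
    + apply Nat.Even_succ in H. specialize (IO H).
      destruct (classic (inVX u)); destruct (classic (inVX x)); destruct (classic (inVX w)); tauto.
    + apply Nat.Odd_succ in H. specialize (IE H).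
      destruct (classic (inVX u)); destruct (classic (inVX x)); destruct (classic (inVX w)); tauto.
Qed.

Variable v0 : V.

Lemma exD x : exists m, is_dist adj v0 x m.
Proof. destruct (conn v0 x) as [n Hn]. eapply has_dist; eauto. Qed.

Definition D x : nat := proj1_sig (constructive_indefinite_description _ (exD x)).

Lemma Dspec x : is_dist adj v0 x (D x).
Proof. unfold D. destruct (constructive_indefinite_description _ _); auto. Qed.

Lemma Dv0 : D v0 = 0.
Proof. destruct (Dspec v0) as [_ H]. specialize (H 0 (walk_nil _ _)). lia. Qed.

Lemma D0 x : D x = 0 -> x = v0.
Proof. intros H. destruct (Dspec x) as [W _]. rewrite H in W. inversion W; auto. Qed.

Lemma Dadj a b : adj a b -> D b <= S (D a).
Proof.
  intros H. destruct (Dspec a) as [W _]. destruct (Dspec b) as [_ M].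
  apply M. eapply walk_snoc; eauto.
Qed.

Lemma Dparent x k : D x = S k -> exists p, adj p x /\ D p = k.
Proof.
  intros H. destruct (Dspec x) as [W _]. rewrite H in W.
  apply walk_sym in W. inversion W; subst.
  exists w. split; [auto|].
  apply walk_sym in H4.
  destruct (Dspec w) as [_ M]. specialize (M _ H4).
  pose proof (Dadj w x (adj_sym _ _ H1)). lia.
Qed.

Lemma Dneq a b : adj a b -> D a <> D b.
Proof.
  intros H E. destruct (Dspec a) as [Wa _]. destruct (Dspec b) as [Wb _].
  apply parity in Wa. apply parity in Wb. rewrite E in Wa.
  pose proof (bip _ _ H).
  destruct (Nat.Even_or_Odd (D b)) as [Hp|Hp].
  - destruct Wa as [Wa _]; destruct Wb as [Wb _]. specialize (Wa Hp); specialize (Wb Hp).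
    destruct (classic (inVX a)); destruct (classic (inVX b)); destruct (classic (inVX v0)); tauto.
  - destruct Wa as [_ Wa]; destruct Wb as [_ Wb]. specialize (Wa Hp); specialize (Wb Hp).
    destruct (classic (inVX a)); destruct (classic (inVX b)); destruct (classic (inVX v0)); tauto.
Qed.

Lemma Dcases a b : adj a b -> D b = S (D a) \/ D a = S (D b).
Proof.
  intros H. pose proof (Dadj a b H). pose proof (Dadj b a (adj_sym _ _ H)).
  pose proof (Dneq a b H). lia.
Qed.

Lemma pchain n : forall p, D p = n -> exists l, rw p l v0 /\ forall y, In y l -> D y <= n.
Proof.
  induction n; intros p Hp.
  - apply D0 in Hp. subst. exists [v0]. split; [constructor|].
    intros y [<-|[]]. rewrite Dv0; auto.
  - destruct (Dparent p n Hp) as [r [Hr Dr]].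
    destruct (IHn r Dr) as [l [Hl Hy]].
    exists (p :: l). split.
    + econstructor; eauto.
    + intros y [<-|Hin]; [lia|]. specialize (Hy y Hin); lia.
Qed.

Lemma parent_uniq p q x : adj p x -> adj q x -> S (D p) = D x -> S (D q) = D x -> p = q.
Proof.
  intros Hp Hq Dp Dq. apply NNPP; intros Hne.
  destruct (pchain _ p eq_refl) as [lp [Rp Ip]].
  destruct (pchain _ q eq_refl) as [lq [Rq Iq]].
  apply (noA x p q (lp ++ rev lq)); auto.
  - eapply rw_app; eauto. apply rw_rev; auto.
  - intros Hin. apply in_app_or in Hin as [Hin|Hin].
    + specialize (Ip _ Hin); lia.
    + apply in_rev in Hin. specialize (Iq _ Hin); lia.
Qed.


Lemma legal_inj (X Y : Type) (c : V -> V -> X + Y) : legal_colouring adj inVX c ->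
  forall a w1 w2, adj a w1 -> adj a w2 -> c a w1 = c a w2 -> w1 = w2.
Proof.
  intros [L1 [L2 L3]] a w1 w2 H1 H2 H3.
  destruct (classic (inVX a)) as [Ha|Ha].
  - eapply (proj1 (proj2 (L1 a Ha))); eauto.
  - eapply (proj1 (proj2 (L2 a Ha))); eauto.
Qed.

Lemma Uniq (Z : Type) (c : V -> V -> Z) :
  (forall a w1 w2, adj a w1 -> adj a w2 -> c a w1 = c a w2 -> w1 = w2) ->
  forall f1 f2 : V -> V, f1 v0 = f2 v0 ->
  (forall a b, adj a b -> adj (f1 a) (f1 b)) ->
  (forall a b, adj a b -> adj (f2 a) (f2 b)) ->
  (forall a b, adj a b -> c (f1 a) (f1 b) = c (f2 a) (f2 b)) ->
  forall x, f1 x = f2 x.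
Proof.
  intros Hinj f1 f2 E A1 A2 C x.
  destruct (conn v0 x) as [n W]. revert E.
  induction W as [y|u w y n Ha Hw IH]; intros E; auto.
  apply IH. apply (Hinj (f1 u)); auto.
  - rewrite E; auto.
  - rewrite C by auto. rewrite E; auto.
Qed.

Variables X Y : Type.
Variables c c' : V -> V -> X + Y.
Hypothesis Lc : legal_colouring adj inVX c.
Hypothesis Lc' : legal_colouring adj inVX c'.
Variable s : X + Y -> X + Y.
Hypothesis Hs : sym_fix_X s.
Variable v1 : V.
Hypothesis part0 : inVX v0 <-> inVX v1.
Hypothesis inv0 : forall u u', adj u v0 -> adj u' v1 -> s (c' u' v1) = c u v0.

Inductive G : V -> V -> Prop :=
| G0 : G v0 v1
| G1 p p' x x' : G p p' -> adj p x -> S (D p) = D x -> adj p' x' ->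
    c p x = s (c' p' x') -> G x x'.

Lemma Ginv x x' : G x x' -> (inVX x <-> inVX x') /\
  (forall u u', adj u x -> adj u' x' -> s (c' u' x') = c u x).
Proof.
  induction 1 as [|p p' x x' Hg IH Ha Hd Ha' Hc].
  - auto.
  - destruct IH as [P _]. split.
    + pose proof (bip _ _ Ha). pose proof (bip _ _ Ha').
      destruct (classic (inVX x)); destruct (classic (inVX x')); destruct (classic (inVX p)); destruct (classic (inVX p')); tauto.
    + intros u u' Hu Hu'. destruct Lc as [_ [_ K]]. destruct Lc' as [_ [_ K']].
      rewrite (K' x' u' p') by auto. rewrite (K x u p) by auto. auto.
Qed.

Lemma Gstep p p' x : G p p' -> adj p x -> exists x', adj p' x' /\ c p x = s (c' p' x').
Proof.
  intros Hg Ha. destruct (Ginv _ _ Hg) as [P _].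
  destruct Hs as [Si [Ss [S3 S4]]].
  destruct Lc as [L1 [L2 _]]. destruct Lc' as [L1' [L2' _]].
  destruct (classic (inVX p)) as [Hp|Hp].
  - destruct (proj1 (L1 p Hp) x Ha) as [z Hz].
    destruct (S4 z) as [z' Hz'].
    destruct (proj2 (proj2 (L1' p' (proj1 P Hp))) z') as [w [Hw1 Hw2]].
    exists w. split; auto. rewrite Hw2, Hz'; auto.
  - destruct (proj1 (L2 p Hp) x Ha) as [y Hy].
    destruct (Ss (inr y)) as [a Ha2].
    destruct a as [z|y'].
    + destruct (S3 z) as [z' Hz']. congruence.
    + assert (Hp' : ~ inVX p') by tauto.
      destruct (proj2 (proj2 (L2' p' Hp')) y') as [w [Hw1 Hw2]].
      exists w. split; auto. rewrite Hw2, Ha2; auto.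
Qed.

Lemma Gfun x a : G x a -> forall b, G x b -> a = b.
Proof.
  induction 1 as [|p p' x x' Hg IH Ha Hd Ha' Hc]; intros b Hb.
  - inversion Hb; subst; auto. match goal with H : S _ = D v0 |- _ => rewrite Dv0 in H; discriminate end.
  - inversion Hb; subst.
    + rewrite Dv0 in Hd. discriminate.
    + assert (p0 = p) by (eapply parent_uniq; eauto; congruence). subst p0.
      specialize (IH _ H). subst p'0.
      apply (legal_inj _ _ c' Lc' p'); auto.
      destruct Hs as [Si _]. apply Si. congruence.
Qed.

Lemma Gtot n : forall x, D x = n -> exists x', G x x'.
Proof.
  induction n; intros x Hx.
  - apply D0 in Hx. subst. exists v1. constructor.
  - destruct (Dparent x n Hx) as [p [Hp Dp]].
    destruct (IHn p Dp) as [p' Hg].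
    destruct (Gstep p p' x Hg Hp) as [x' [H1 H2]].
    exists x'. econstructor; eauto. lia.
Qed.

Definition gg x : V := proj1_sig (constructive_indefinite_description _ (Gtot _ x eq_refl)).

Lemma Ggg x : G x (gg x).
Proof. unfold gg. destruct (constructive_indefinite_description _ _); auto. Qed.

Lemma E_main : gg v0 = v1 /\
  (forall a b, adj a b -> adj (gg a) (gg b) /\ c a b = s (c' (gg a) (gg b))) /\
  (forall x, inVX x <-> inVX (gg x)).
Proof.
  split; [|split].
  - symmetry. apply (Gfun _ _ G0). apply Ggg.
  - intros a b Hab. destruct (Dcases a b Hab) as [Hd|Hd].
    + destruct (Gstep _ _ b (Ggg a) Hab) as [x' [H1 H2]].
      assert (gg b = x') by (apply (Gfun _ _ (Ggg b)); econstructor; eauto; apply Ggg).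
      subst x'. auto.
    + destruct (Gstep _ _ a (Ggg b) (adj_sym _ _ Hab)) as [x' [H1 H2]].
      assert (gg a = x').
      { apply (Gfun _ _ (Ggg a)). eapply G1; [apply Ggg | apply adj_sym; exact Hab | auto | exact H1 | exact H2]. }
      subst x'. split; auto.
      symmetry. apply (proj2 (Ginv _ _ (Ggg b))); auto.
  - intros x. apply (proj1 (Ginv _ _ (Ggg x))).
Qed.

End Tr.

Lemma E_ex V adj (adj_sym : forall u w : V, adj u w -> adj w u) (nocyc : ~ has_cycle adj)
  (conn : forall u w : V, exists n : nat, walk adj u w n) inVX
  (bip : forall u w : V, adj u w -> inVX u <-> ~ inVX w) v0 X Y (c c' : V -> V -> X + Y)
  (Lc : legal_colouring adj inVX c) (Lc' : legal_colouring adj inVX c') s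
  (Hs : sym_fix_X s) v1 (part0 : inVX v0 <-> inVX v1)
  (inv0 : forall u u' : V, adj u v0 -> adj u' v1 -> s (c' u' v1) = c u v0) :
  exists g, g v0 = v1 /\
  (forall a b, adj a b -> adj (g a) (g b) /\ c a b = s (c' (g a) (g b))) /\
  (forall x, inVX x <-> inVX (g x)).
Proof. exists (gg V adj adj_sym conn inVX bip v0 X Y c c' Lc Lc' s Hs v1 part0 inv0). eapply E_main; eauto. Qed.

Definition swp {A : Type} (a b z : A) : A :=
  if excluded_middle_informative (z = a) then b
  else if excluded_middle_informative (z = b) then a else z.

Lemma swp_a {A : Type} (a b : A) : swp a b a = b.
Proof. unfold swp. destruct (excluded_middle_informative (a = a)); congruence. Qed.

Lemma swp_inv {A : Type} (a b z : A) : swp a b (swp a b z) = z.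
Proof.
  unfold swp.
  repeat (destruct excluded_middle_informative; subst; try congruence).
Qed.

Definition isl {X Y : Type} (z : X + Y) : Prop := match z with inl _ => True | inr _ => False end.

Lemma swp_side {X Y : Type} (a b z : X + Y) : (isl a <-> isl b) -> (isl (swp a b z) <-> isl z).
Proof.
  intros H. unfold swp.
  repeat (destruct excluded_middle_informative; subst; try tauto).
Qed.

Lemma swp_sym {X Y : Type} (a b : X + Y) : (isl a <-> isl b) -> sym_fix_X (swp a b).
Proof.
  intros H. split; [|split; [|split]].
  - intros x y E. rewrite <- (swp_inv a b x), <- (swp_inv a b y). congruence.
  - intros y. exists (swp a b y). apply swp_inv.
  - intros x. pose proof (swp_side a b (inl x) H). destruct (swp a b (inl x)) eqn:E.
    + eauto.
    + simpl in H0. tauto.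
  - intros x'. pose proof (swp_side a b (inl x') H). destruct (swp a b (inl x')) as [x|y] eqn:E.
    + exists x. rewrite <- E. apply swp_inv.
    + simpl in H0. tauto.
Qed.

Lemma id_sym {X Y : Type} : sym_fix_X (fun z : X + Y => z).
Proof. split; [|split; [|split]]; eauto. Qed.

Lemma side V adj inVX X Y (c : V -> V -> X + Y) : legal_colouring adj inVX c ->
  forall a b, adj a b -> (inVX a <-> isl (c a b)).
Proof.
  intros [L1 [L2 _]] a b H. destruct (classic (inVX a)) as [Ha|Ha].
  - destruct (proj1 (L1 a Ha) b H) as [x E]. rewrite E; simpl; tauto.
  - destruct (proj1 (L2 a Ha) b H) as [x E]. rewrite E; simpl; tauto.
Qed.

Theorem lemma3p3 (X Y V : Type) (adj : V -> V -> Prop) (inVX : V -> Prop)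
    (c c' : V -> V -> X + Y) (v v' : V) :
  (exists x1 x2 : X, x1 <> x2) ->
  (exists y1 y2 : Y, y1 <> y2) ->
  biregular_tree X Y adj inVX ->
  legal_colouring adj inVX c ->
  legal_colouring adj inVX c' ->
  even_distance adj v v' ->
  (exists s : X + Y -> X + Y, sym_fix_X s /\
     forall u u', adj u v -> adj u' v' -> s (c' u' v') = c u v) /\
  (forall s : X + Y -> X + Y, sym_fix_X s ->
     (forall u u', adj u v -> adj u' v' -> s (c' u' v') = c u v) ->
     exists g : V -> V, good_aut adj inVX c c' s v v' g /\
       forall g' : V -> V, good_aut adj inVX c c' s v v' g' ->
         forall x, g' x = g x).
Proof.
  intros _ _ [[Hsym [Hirr [Hconn Hnc]]] [Hbip _]] Lc Lc' [n [[Wn _] Ev]].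
  assert (Hpart : inVX v <-> inVX v') by (exact (proj1 (parity _ _ _ Hbip _ _ _ Wn) Ev)).
  split.
  - destruct (classic (exists u0, adj u0 v)) as [[u0 Hu0]|Hn1].
    2:{ exists (fun z => z). split; [apply id_sym|]. intros u u' Hu; exfalso; eauto. }
    destruct (classic (exists u0, adj u0 v')) as [[u0' Hu0']|Hn1].
    2:{ exists (fun z => z). split; [apply id_sym|]. intros u u' Hu Hu'; exfalso; eauto. }
    exists (swp (c' u0' v') (c u0 v)). split.
    + apply swp_sym.
      pose proof (side _ _ _ _ _ _ Lc _ _ Hu0). pose proof (side _ _ _ _ _ _ Lc' _ _ Hu0').
      pose proof (Hbip _ _ Hu0). pose proof (Hbip _ _ Hu0').
      destruct (classic (inVX u0)); destruct (classic (inVX u0')); destruct (classic (inVX v)); destruct (classic (inVX v')); tauto.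
    + intros u u' Hu Hu'. destruct Lc as [_ [_ K]]. destruct Lc' as [_ [_ K']].
      rewrite (K' v' u' u0') by auto. rewrite (K v u u0) by auto. apply swp_a.
  - intros s Hs Hinv.
    pose proof Hs as [Si [Ss [S3 S4]]].
    set (sinv := fun b => proj1_sig (constructive_indefinite_description _ (Ss b))).
    assert (ssinv : forall b, s (sinv b) = b).
    { intros b. unfold sinv. destruct (constructive_indefinite_description _ _); auto. }
    assert (sinvs : forall a, sinv (s a) = a).
    { intros a. apply Si. apply ssinv. }
    assert (Hsi : sym_fix_X sinv).
    { split; [|split; [|split]].
      - intros a b E. rewrite <- (ssinv a), <- (ssinv b), E. auto.
      - intros b. exists (s b). auto.
      - intros x. destruct (sinv (inl x)) as [x'|y] eqn:E; [eauto|].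
        exfalso. destruct (S4 x) as [z Hz]. rewrite <- (ssinv (inl x)), E in Hz.
        apply Si in Hz. discriminate.
      - intros x'. destruct (S3 x') as [x Hx]. exists x. rewrite <- Hx. auto. }
    destruct (E_ex V adj Hsym Hnc Hconn inVX Hbip v X Y c c' Lc Lc' s Hs v' Hpart Hinv)
      as [g [Gv [Ga Gp]]].
    assert (Hpart' : inVX v' <-> inVX v) by tauto.
    assert (Hinv' : forall u' u, adj u' v' -> adj u v -> sinv (c u v) = c' u' v').
    { intros u' u H1 H2. rewrite <- (Hinv u u') by auto. auto. }
    destruct (E_ex V adj Hsym Hnc Hconn inVX Hbip v' X Y c' c Lc' Lc sinv Hsi v Hpart' Hinv')
      as [h [Hv [Ha Hp]]].
    assert (hg : forall x, h (g x) = x).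
    { apply (Uniq V adj Hsym Hconn v _ c (legal_inj _ _ _ _ _ c Lc)).
      - rewrite Gv; auto.
      - intros a b H. apply (proj1 (Ha _ _ (proj1 (Ga _ _ H)))).
      - auto.
      - intros a b H. destruct (Ga a b H) as [H1 H2]. destruct (Ha _ _ H1) as [_ H3].
        rewrite H2, H3. auto. }
    assert (gh : forall y, g (h y) = y).
    { apply (Uniq V adj Hsym Hconn v' _ c' (legal_inj _ _ _ _ _ c' Lc')).
      - rewrite Hv; auto.
      - intros a b H. apply (proj1 (Ga _ _ (proj1 (Ha _ _ H)))).
      - auto.
      - intros a b H. destruct (Ha a b H) as [H1 H2]. destruct (Ga _ _ H1) as [_ H3].
        rewrite H2, H3. auto. }
    exists g. split.
    + split; [|split; [|split]].
      * split; [|split].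
        -- intros a b E. rewrite <- (hg a), <- (hg b), E. auto.
        -- intros y. exists (h y). auto.
        -- intros a b. split; [intros H; apply (proj1 (Ga _ _ H))|].
           intros H. rewrite <- (hg a), <- (hg b). apply (proj1 (Ha _ _ H)).
      * split.
        -- intros x Hx. apply (proj1 (Gp x)); auto.
        -- intros y Hy. exists (h y). split; auto. apply (proj1 (Hp y)); auto.
      * auto.
      * intros a b H. apply (proj2 (Ga _ _ H)).
    + intros g' [[_ [_ Ag']] [_ [Eg' Cg']]] x.
      apply (Uniq V adj Hsym Hconn v _ c' (legal_inj _ _ _ _ _ c' Lc')); auto.
      * congruence.
      * intros a b H. apply (proj1 (Ag' a b)); exact H.
      * intros a b H. apply (proj1 (Ga _ _ H)).
      * intros a b H. apply Si. rewrite <- Cg' by auto. apply (proj2 (Ga _ _ H)).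
Qed.
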